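(* Let $R$ be an associative ring with identity and $M$ a left $R$-module which is projective in $\sigma[M]$. Suppose that for every fully invariant submodule $N\leq M$ the factor module $M/N$ has finite uniform dimension. Then the topological space $LgSpec(M)$ is weakly scattered.
   Context: $\Lambda^{fi}(M)$ is the set of fully invariant submodules of $M$. For $N,L\leq M$, $N_ML=\sum\{f(N)\mid f\in\mathrm{Hom}_R(M,L)\}$. $LgSpec(M)$ is the set of submodules $P\neq M$ such that for all $N,L\in\Lambda^{fi}(M)$, $N_ML\subseteq P$ implies $N\subseteq P$ or $L\subseteq P$, with the topology whose open sets are $\{P\in LgSpec(M)\mid N\nsubseteq P\}$, $N\in\Lambda^{fi}(M)$. A topological space $S$ is weakly scattered if every non-empty closed subset $F$ contains a point $x$ that is weakly isolated in $F$, i.e. there is an open set $U$ with $x\in U\cap F\subseteq\overline{\{x\}}$. *)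

(* Defs.v *)
From mathcomp Require Import all_boot all_order all_algebra.
Set Implicit Arguments. Unset Strict Implicit. Unset Printing Implicit Defensive.
Import GRing.Theory.
Local Open Scope ring_scope.

Section ModuleDefs.
Variable R : pzRingType.

Definition subset_of (T : Type) (A B : T -> Prop) := forall x, A x -> B x.

Definition is_hom (A B : lmodType R) (f : A -> B) : Prop :=
  forall (a : R) (x y : A), f (a *: x + y) = a *: f x + f y.

Definition submod (M : lmodType R) (N : M -> Prop) : Prop :=
  N 0 /\ (forall x y, N x -> N y -> N (x + y)) /\
  (forall (a : R) x, N x -> N (a *: x)).

Definition span (M : lmodType R) (S : M -> Prop) : M -> Prop :=
  fun x => forall P : M -> Prop, submod P -> subset_of S P -> P x.

Definition fully_invariant (M : lmodType R) (N : M -> Prop) : Prop :=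
  submod N /\ forall f : M -> M, is_hom f -> forall x, N x -> N (f x).

(* N_M L = sum { f(N) | f in Hom_R(M, L) } *)
Definition prodM (M : lmodType R) (N L : M -> Prop) : M -> Prop :=
  span (fun y => exists f : M -> M, is_hom f /\ (forall x, L (f x)) /\
                  exists x, N x /\ y = f x).

Definition LgSpec (M : lmodType R) (P : M -> Prop) : Prop :=
  submod P /\ ~ (forall x, P x) /\
  forall N L : M -> Prop, fully_invariant N -> fully_invariant L ->
    subset_of (prodM N L) P -> subset_of N P \/ subset_of L P.

Definition LgSpec_pt (M : lmodType R) := {P : M -> Prop | LgSpec P}.

Definition LgSpec_open (M : lmodType R) (U : LgSpec_pt M -> Prop) : Prop :=
  exists N : M -> Prop, fully_invariant N /\
    forall p, U p <-> ~ subset_of N (proj1_sig p).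

Definition M_generated (M K : lmodType R) : Prop :=
  forall k : K, span (fun y => exists f : M -> K, is_hom f /\
                         exists x, y = f x) k.

Definition in_sigma (M N : lmodType R) : Prop :=
  exists (K : lmodType R) (i : N -> K), M_generated M K /\ is_hom i /\
    injective i.

Definition projective_in_sigma (M : lmodType R) : Prop :=
  forall (A B : lmodType R), in_sigma M A ->
  forall g : A -> B, is_hom g -> (forall b, exists a, g a = b) ->
  forall h : M -> B, is_hom h ->
  exists f : M -> A, is_hom f /\ forall x, g (f x) = h x.

(* M/N has finite uniform dimension: M/N contains no infinite direct sum of
   nonzero submodules; stated through the correspondence between submodules
   of M/N and submodules K of M with N <= K (K/N nonzero iff K not <= N;
   (K_n/N)_n independent iff K_n /\ sum_{m<>n} K_m <= N). *)
Definition quot_finite_udim (M : lmodType R) (N : M -> Prop) : Prop :=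
  ~ exists K : nat -> M -> Prop,
      (forall n, submod (K n) /\ subset_of N (K n) /\ ~ subset_of (K n) N) /\
      (forall n x, K n x -> span (fun y => exists m, m <> n /\ K m y) x -> N x).

End ModuleDefs.

Section Topo.
Variable X : Type.
Variable is_open : (X -> Prop) -> Prop.

Definition is_closed (F : X -> Prop) : Prop :=
  exists U, is_open U /\ forall x, F x <-> ~ U x.

Definition closure1 (x : X) : X -> Prop :=
  fun y => forall F, is_closed F -> F x -> F y.

Definition weakly_isolated (F : X -> Prop) (x : X) : Prop :=
  F x /\ exists U, is_open U /\ U x /\
    forall y, U y -> F y -> closure1 x y.

Definition weakly_scattered : Prop :=
  forall F, is_closed F -> (exists x, F x) -> exists x, weakly_isolated F x.
End Topo.

(* Main.v *)
Require Import Defs.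
From mathcomp Require Import all_boot all_order all_algebra.
From Stdlib Require Import Classical ClassicalEpsilon.
Set Implicit Arguments. Unset Strict Implicit. Unset Printing Implicit Defensive.
Import GRing.Theory.
Local Open Scope ring_scope.

Section Helpers.
Variable R : pzRingType.
Variable M : lmodType R.

Lemma hom_add (f : M -> M) : is_hom f -> forall x y, f (x + y) = f x + f y.
Proof. move=> hf x y; have := hf 1 x y; by rewrite !scale1r. Qed.

Lemma hom0 (f : M -> M) : is_hom f -> f 0 = 0.
Proof.
move=> hf; have := hom_add hf 0 0; rewrite addr0 => h.
apply: (@addrI _ (f 0)); by rewrite addr0 -h.
Qed.

Lemma homZ (f : M -> M) : is_hom f -> forall a x, f (a *: x) = a *: f x.
Proof. move=> hf a x; have := hf a x 0; by rewrite (hom0 hf) !addr0. Qed.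

Lemma span_submod (S : M -> Prop) : submod (Defs.span S).
Proof.
split; [|split].
- by move=> P [h0 _] _.
- move=> x y hx hy P hP hS; case: (hP) => _ [hD _]; exact: hD _ _ (hx P hP hS) (hy P hP hS).
- move=> a x hx P hP hS; case: (hP) => _ [_ hZ]; exact: hZ _ _ (hx P hP hS).
Qed.

Lemma span_in (S : M -> Prop) x : S x -> Defs.span S x.
Proof. by move=> hx P _ hS; apply: hS. Qed.

Lemma span_sub (S P : M -> Prop) : submod P -> subset_of S P -> subset_of (Defs.span S) P.
Proof. by move=> hP hS x hx; apply: hx. Qed.

Lemma span_hom (S : M -> Prop) (f : M -> M) : is_hom f -> (forall y, S y -> S (f y)) ->
  forall x, Defs.span S x -> Defs.span S (f x).
Proof.
move=> hf hS x hx.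
apply: (hx (fun z => Defs.span S (f z))).
- split; [|split].
  + rewrite (hom0 hf); by case: (span_submod S).
  + move=> u v hu hv; rewrite (hom_add hf); case: (span_submod S) => _ [hD _]; exact: hD.
  + move=> a u hu; rewrite (homZ hf); case: (span_submod S) => _ [_ hZ]; exact: hZ.
- move=> y hy; apply: span_in; exact: hS.
Qed.

Definition sumsub (A B : M -> Prop) : M -> Prop :=
  fun m => exists a b, A a /\ B b /\ m = a + b.

Lemma sumsub_FI A B : fully_invariant A -> fully_invariant B -> fully_invariant (sumsub A B).
Proof.
move=> [[A0 [AD AZ]] Af] [[B0 [BD BZ]] Bf]; split; [split; [|split]|].
- exists 0, 0; split; [exact: A0|split; [exact: B0|by rewrite addr0]].
- move=> x y [a [b [ha [hb ->]]]] [a' [b' [ha' [hb' ->]]]].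
  exists (a + a'), (b + b'); split; [exact: AD|split; [exact: BD|]].
  by rewrite addrACA.
- move=> c x [a [b [ha [hb ->]]]]; exists (c *: a), (c *: b).
  split; [exact: AZ|split;[exact: BZ|]]; by rewrite scalerDr.
- move=> f hf x [a [b [ha [hb ->]]]]; exists (f a), (f b).
  split; [exact: Af|split;[exact: Bf|]]; exact: hom_add.
Qed.

Lemma sumsub_sub A B P : submod P -> subset_of A P -> subset_of B P -> subset_of (sumsub A B) P.
Proof.
move=> [_ [PD _]] hA hB x [a [b [ha [hb ->]]]]; apply: PD; [exact: hA|exact: hB].
Qed.

Lemma zero_FI : fully_invariant (fun m : M => m = 0).
Proof.
split; [split; [|split]|].
- by [].
- by move=> x y -> ->; rewrite addr0.
- by move=> a x ->; rewrite scaler0.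
- by move=> f hf x ->; rewrite (hom0 hf).
Qed.

Lemma True_FI : fully_invariant (fun m : M => True).
Proof. by split; [split; [|split]|]. Qed.

Lemma cap_FI A B : fully_invariant A -> fully_invariant B -> fully_invariant (fun m : M => A m /\ B m).
Proof.
move=> [[A0 [AD AZ]] Af] [[B0 [BD BZ]] Bf]; split; [split; [|split]|].
- by split.
- move=> x y [h1 h2] [h3 h4]; split; [exact: AD|exact: BD].
- move=> a x [h1 h2]; split; [exact: AZ|exact: BZ].
- move=> f hf x [h1 h2]; split; [exact: Af|exact: Bf].
Qed.

Lemma pt_submod (p : LgSpec_pt M) : submod (proj1_sig p).
Proof. by case: (proj2_sig p). Qed.

Lemma pt_prime (p : LgSpec_pt M) N L : fully_invariant N -> fully_invariant L ->
  subset_of (prodM N L) (proj1_sig p) -> subset_of N (proj1_sig p) \/ subset_of L (proj1_sig p).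
Proof. case: (proj2_sig p) => _ [_ h]; exact: h. Qed.

Lemma prodM_subl (A L : M -> Prop) : fully_invariant A -> subset_of (prodM A L) A.
Proof.
move=> [hA Af]; apply: span_sub => // y [f [hf [_ [x [hx ->]]]]]; exact: Af.
Qed.

Lemma prodM_subr (A L : M -> Prop) : submod L -> subset_of (prodM A L) L.
Proof.
move=> hL; apply: span_sub => // y [f [hf [hfL [x [hx ->]]]]]; exact: hfL.
Qed.

Lemma cap_pt (p : LgSpec_pt M) A B : fully_invariant A -> fully_invariant B ->
  subset_of (fun m => A m /\ B m) (proj1_sig p) ->
  subset_of A (proj1_sig p) \/ subset_of B (proj1_sig p).
Proof.
move=> hA hB h; apply: pt_prime => // x hx; apply: h; split.
- exact: prodM_subl hx.
- exact: prodM_subr (hB.1) _ hx.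
Qed.

Definition core (G : LgSpec_pt M -> Prop) : M -> Prop :=
  fun m => exists Q, fully_invariant Q /\
    (forall p, G p -> subset_of Q (proj1_sig p)) /\ Q m.

Lemma core_FI G : fully_invariant (core G).
Proof.
split; [split; [|split]|].
- exists (fun m : M => m = 0); split; [exact: zero_FI|split=> //].
  move=> p _ x ->; by case: (pt_submod p).
- move=> x y [Q1 [h1 [g1 q1]]] [Q2 [h2 [g2 q2]]].
  exists (sumsub Q1 Q2); split; [exact: sumsub_FI|split].
  + move=> p hp; apply: sumsub_sub; [exact: pt_submod|exact: g1|exact: g2].
  + by exists x, y.
- move=> a x [Q [h [g q]]]; exists Q; split=> //; split=> //.
  case: h => [[_ [_ hZ]] _]; exact: hZ.
- move=> f hf x [Q [h [g q]]]; exists Q; split=> //; split=> //.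
  case: h => _ hQ; exact: hQ.
Qed.

Lemma core_sub G p : G p -> subset_of (core G) (proj1_sig p).
Proof. move=> hp x [Q [_ [g q]]]; exact: g hp _ q. Qed.

Lemma FI_sub_core G X : fully_invariant X -> (forall p, G p -> subset_of X (proj1_sig p)) ->
  subset_of X (core G).
Proof. move=> hX hG x hx; by exists X. Qed.

End Helpers.

Theorem corollary4p33 (R : pzRingType) (M : lmodType R) :
  projective_in_sigma M ->
  (forall N : M -> Prop, fully_invariant N -> quot_finite_udim N) ->
  weakly_scattered (@LgSpec_open R M).
Proof.
move=> _ Hud F [U [[N0 [HN0 HU]] HF]] [p0 Fp0].
have inF : forall p, F p <-> subset_of N0 (proj1_sig p).
  move=> p; split.
  - move=> Fp; apply: NNPP => h; exact: (proj1 (HF p) Fp) (proj2 (HU p) h).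
  - move=> h; apply: (proj2 (HF p)) => hu; exact: (proj1 (HU p) hu) h.
apply: NNPP => Hno.
pose D := fun (A : M -> Prop) (p : LgSpec_pt M) =>
  subset_of N0 (proj1_sig p) /\ ~ subset_of A (proj1_sig p).
have Hsplit : forall L, fully_invariant L -> (exists p, D L p) ->
  exists A B, fully_invariant A /\ fully_invariant B /\
    (exists p, D A p /\ D L p) /\ (exists p, D B p /\ D L p) /\
    (forall p, D A p -> D B p -> D L p -> False).
  move=> L HL [q Dq]; apply: NNPP => Hirr.
  have Hirr' : forall A B, fully_invariant A -> fully_invariant B ->
      (exists p, D A p /\ D L p) -> (exists p, D B p /\ D L p) ->
      exists p, D A p /\ D B p /\ D L p.
    move=> A B HA HB ha hb; apply: NNPP => hn; apply: Hirr; exists A, B.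
    refine (conj HA (conj HB (conj ha (conj hb _)))) => p pa pb pl.
    apply: hn; by exists p.
  pose I := core (D L).
  have HLI : ~ subset_of L I.
    move=> h; apply: (proj2 Dq) => z hz; exact: (@core_sub _ _ (D L) _ Dq z (h z hz)).
  have HI : LgSpec I.
    split; [exact: (core_FI (D L)).1|split].
    - move=> hall; apply: HLI => z _; exact: hall.
    - move=> N' L' HN' HL' hsub; apply: NNPP => hn.
      case: (not_or_and _ _ hn) => hn1 hn2.
      have e1 : exists p, D N' p /\ D L p.
        apply: NNPP => h1; apply: hn1; apply: FI_sub_core => // p Dp.
        apply: NNPP => h2; apply: h1; exists p; split=> //; split=> //; exact: Dp.1.
      have e2 : exists p, D L' p /\ D L p.
        apply: NNPP => h1; apply: hn2; apply: FI_sub_core => // p Dp.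
        apply: NNPP => h2; apply: h1; exists p; split=> //; split=> //; exact: Dp.1.
      have [p [Dp1 [Dp2 Dp3]]] := Hirr' _ _ HN' HL' e1 e2.
      case: (pt_prime HN' HL' (fun x hx => @core_sub _ _ (D L) _ Dp3 _ (hsub x hx))) => h.
      + exact: Dp1.2 h.
      + exact: Dp2.2 h.
  apply: Hno; exists (exist _ I HI); split.
  - apply/inF; apply: FI_sub_core => // p Dp; exact: Dp.1.
  exists (fun p : LgSpec_pt M => ~ subset_of L (proj1_sig p)); split.
    exists L; split=> // p; exact: iff_refl.
  split; first exact: HLI.
  move=> y hy Fy F' [U'' [[N'' [HN'' HU'']] HF']] F'x.
  have hNI : subset_of N'' I.
    apply: NNPP => h; exact: (proj1 (HF' _) F'x (proj2 (HU'' (exist _ I HI)) h)).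
  have Dy : D L y by split=> //; apply/inF.
  apply: (proj2 (HF' y)) => hu; apply: (proj1 (HU'' y) hu) => z hz.
  exact: @core_sub _ _ (D L) _ Dy _ (hNI z hz).
pose T := {L : M -> Prop | fully_invariant L /\ exists p, D L p}.
have Hstep : forall t : T, exists wv : T * T,
    (forall p, D (proj1_sig wv.1) p -> D (proj1_sig t) p) /\
    (forall p, D (proj1_sig wv.2) p -> D (proj1_sig t) p) /\
    (forall p, D (proj1_sig wv.1) p -> D (proj1_sig wv.2) p -> False).
  move=> [L [HL hne]].
  have [A [B [HA [HB [[pa [Pa Pla]] [[pb [Pb Plb]] Hd]]]]]] := Hsplit L HL hne.
  have Dcap : forall X, fully_invariant X -> forall p,
      D (fun m => X m /\ L m) p <-> D X p /\ D L p.
    move=> X HX p; split.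
    - move=> [h1 h2]; split; split=> // h; apply: h2 => z [hz hz']; exact: h.
    - move=> [[h1 h2] [_ h3]]; split=> // h.
      by case: (cap_pt HX HL h).
  exists (exist _ (fun m => A m /\ L m)
            (conj (cap_FI HA HL) (ex_intro _ pa (proj2 (Dcap A HA pa) (conj Pa Pla)))),
          exist _ (fun m => B m /\ L m)
            (conj (cap_FI HB HL) (ex_intro _ pb (proj2 (Dcap B HB pb) (conj Pb Plb))))).
  simpl; split; [|split].
  - by move=> p /(Dcap A HA) [].
  - by move=> p /(Dcap B HB) [].
  - move=> p /(Dcap A HA) [h1 h2] /(Dcap B HB) [h3 _]; exact: Hd h1 h3 h2.
pose g := fun t : T => proj1_sig (constructive_indefinite_description _ (Hstep t)).
have gP : forall t : T, _ := fun t => proj2_sig (constructive_indefinite_description _ (Hstep t)).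
have Dtrue : D (fun _ => True) p0.
  split; first exact/inF.
  move=> h; case: (proj2_sig p0) => _ [h' _]; apply: h' => x; exact: h.
pose t0 : T := exist _ (fun _ => True) (conj (True_FI M) (ex_intro _ p0 Dtrue)).
pose Vs := fix Vs n := match n with 0 => t0 | n'.+1 => (g (Vs n')).2 end.
pose Ks := fun n => (g (Vs n)).1.
have HVS : forall n p, D (proj1_sig (Vs n.+1)) p -> D (proj1_sig (Vs n)) p.
  move=> n p; exact: (proj1 (proj2 (gP (Vs n))) p).
have HKV : forall n p, D (proj1_sig (Ks n)) p -> D (proj1_sig (Vs n)) p.
  move=> n p; exact: (proj1 (gP (Vs n)) p).
have HKd : forall n p, D (proj1_sig (Ks n)) p -> D (proj1_sig (Vs n.+1)) p -> False.
  move=> n p; exact: (proj2 (proj2 (gP (Vs n))) p).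
have HVk : forall k n p, D (proj1_sig (Vs (n + k)%N)) p -> D (proj1_sig (Vs n)) p.
  elim=> [|k IH] n p; first by rewrite addn0.
  rewrite addnS => h; apply: IH; exact: HVS.
have Hdisj : forall n m p, (n < m)%N -> D (proj1_sig (Ks n)) p -> D (proj1_sig (Ks m)) p -> False.
  move=> n m p hnm h1 h2; apply: (HKd n p h1).
  apply: (HVk (m - n.+1)%N); rewrite subnKC //; exact: HKV.
pose A := fun n => proj1_sig (Ks n).
have HA : forall n, fully_invariant (A n) := fun n => (proj2_sig (Ks n)).1.
have HAne : forall n, exists p, D (A n) p := fun n => (proj2_sig (Ks n)).2.
have Hor : forall n m : nat, n <> m -> forall p : LgSpec_pt M, subset_of N0 (proj1_sig p) ->
    subset_of (A n) (proj1_sig p) \/ subset_of (A m) (proj1_sig p).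
  move=> n m hnm p hp; apply: NNPP => h; case: (not_or_and _ _ h) => h1 h2.
  case: (ltngtP n m) => hc.
  - exact: Hdisj hc (conj hp h1) (conj hp h2).
  - exact: Hdisj hc (conj hp h2) (conj hp h1).
  - exact: hnm hc.
pose G := fun p : LgSpec_pt M => subset_of N0 (proj1_sig p).
pose Rad := core G.
have RadFI : fully_invariant Rad := core_FI G.
pose K := fun n => sumsub (A n) Rad.
have HK : forall n, fully_invariant (K n) := fun n => sumsub_FI (HA n) RadFI.
apply: (Hud Rad RadFI); exists K; split.
  move=> n; split; first exact: (HK n).1.
  split.
  - move=> x hx; exists 0, x; split; first by case: (HA n) => [[]].
    split=> //; by rewrite add0r.
  - move=> h; have [p Dp] := HAne n; apply: Dp.2 => z hz.
    apply: (@core_sub _ _ G _) Dp.1 _ _; apply: h; exists z, 0; split=> //.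
    split; first by case: RadFI => [[]].
    by rewrite addr0.
move=> n x hKx hspan.
pose S := fun y => exists m, m <> n /\ K m y.
pose X := fun z => K n z /\ Defs.span S z.
have HX : fully_invariant X.
  have [[K0 [KD KZ]] Kf] := HK n.
  have [S0 [SD SZ]] := span_submod S.
  split; [split; [|split]|].
  - by split.
  - move=> u v [h1 h2] [h3 h4]; split; [exact: KD|exact: SD].
  - move=> a u [h1 h2]; split; [exact: KZ|exact: SZ].
  - move=> f hf u [h1 h2]; split; first exact: Kf.
    apply: span_hom => // y [m [hm hy]]; exists m; split=> //.
    exact: (HK m).2.
have : subset_of X Rad.
  apply: FI_sub_core => // p hp.
  case: (classic (subset_of (A n) (proj1_sig p))) => hAn.
  - move=> z [hz _]; apply: sumsub_sub hz; [exact: pt_submod|exact: hAn|].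
    exact: core_sub hp.
  - move=> z [_ hz]; apply: span_sub hz; first exact: pt_submod.
    move=> y [m [hm hy]]; apply: sumsub_sub hy; [exact: pt_submod| |exact: core_sub hp].
    by case: (Hor n m (fun e => hm (esym e)) p hp).
by apply; split.
Qed.
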